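(* Let $G$ be a connected graph. (i) For any $R\subseteq V(G)$: if $v_1v_2\cdots v_kv_1$ ($k\geq 3$) is a cycle in $G_R$ and some edge of this cycle belongs to $\mathcal{U}_R(r)$ for some $r\in R$, then at least two edges of this cycle belong to $\mathcal{U}_R(r)$. (ii) Let $R$ be a resolving set of $G$ and $r\in R$, and let $x,y,z\in V(G)$ be distinct. If $\{x,y\}\in\mathcal{U}_R(r)$ and $\{x,z\}\in\mathcal{U}_R(r)$, then $\{y,z\}\in\mathcal{U}_R(r)$. (iii) If $b$ is a basis forced vertex of $G$ and $R$ is a metric basis of $G$, then $|\mathcal{U}_R(b)|\geq 2$. (iv) If $b$ is a basis forced vertex of $G$ and $R$ is a metric basis of $G$, then there exist $x,y\in V(G)\setminus R$ with $\{x,y\}\in\mathcal{U}_R(b)$.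
   Context: All graphs are finite and simple. For vertices $u,v$ of a connected graph $G$, $d(u,v)$ is the length of a shortest $u$–$v$ path. A set $R\subseteq V(G)$ is a resolving set if for all distinct $x,y\in V(G)$ there is $r\in R$ with $d(r,x)\neq d(r,y)$; a resolving set of minimum cardinality is a metric basis; a vertex is a basis forced vertex if it belongs to every metric basis. For $R\subseteq V(G)$ and $r\in R$, $\mathcal{U}_R(r)$ is the set of unordered pairs $\{x,y\}$ of vertices of $G$ such that $d(r,x)\neq d(r,y)$ and $d(t,x)=d(t,y)$ for all $t\in R\setminus\{r\}$ (pairs resolved by $r$ and by no other element of $R$). The colour graph $G_R$ has vertex set $V(G)$ and edge set $\bigcup_{r\in R}\mathcal{U}_R(r)$; the edges in $\mathcal{U}_R(r)$ are said to have the colour associated with $r$ (these sets are pairwise disjoint). *)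

(* Defs.v *)
From mathcomp Require Import all_boot all_order.
Set Implicit Arguments. Unset Strict Implicit. Unset Printing Implicit Defensive.

Section Defs.
Variables (T : finType) (e : rel T).

Definition simple_graph := symmetric e /\ irreflexive e.
Definition connected_graph := forall u v : T, connect e u v.

Definition walkn (u v : T) (n : nat) : bool :=
  [exists p : n.-tuple T, path e u p && (last u p == v)].

(* d(u,v): least n such that there is a u-v walk of length n
   (= length of a shortest u-v path); for a connected graph it is < #|T| *)
Definition dist (u v : T) : nat := find (walkn u v) (iota 0 #|T|).

Definition resolving (R : {set T}) : Prop :=
  forall x y : T, x != y -> exists2 r, r \in R & dist r x != dist r y.

Definition metric_basis (R : {set T}) : Prop :=
  resolving R /\ forall S : {set T}, resolving S -> #|R| <= #|S|.

Definition basis_forced (b : T) : Prop :=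
  forall R : {set T}, metric_basis R -> b \in R.

Definition uniq_res (R : {set T}) (r : T) : {set {set T}} :=
  [set P : {set T} | [exists x, exists y,
     [&& P == [set x; y], dist r x != dist r y &
         [forall t in R :\ r, dist t x == dist t y]]]].

Definition colour_edges (R : {set T}) : {set {set T}} :=
  \bigcup_(r in R) uniq_res R r.

Definition cycle_edges (s : seq T) : seq {set T} :=
  [seq [set p.1; p.2] | p <- zip s (rot 1 s)].

Definition colour_cycle (R : {set T}) (s : seq T) : bool :=
  [&& uniq s, 3 <= size s & all (fun P => P \in colour_edges R) (cycle_edges s)].

End Defs.

(* Main.v *)
Require Import Defs.
From mathcomp Require Import all_boot all_order.
Set Implicit Arguments. Unset Strict Implicit. Unset Printing Implicit Defensive.

Section Helpers.
Variables (T : finType) (e : rel T).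

Lemma walkn0 u v : walkn e u v 0 = (u == v).
Proof.
apply/existsP/eqP => [[p /andP [_ /eqP]]|->].
  by rewrite (tuple0 p).
by exists [tuple]; rewrite /= eqxx.
Qed.

Lemma dist0 u v : (dist e u v == 0) = (u == v).
Proof.
rewrite /dist; have : 0 < #|T| by apply/card_gt0P; exists u.
case: #|T| => // n _; rewrite /= walkn0; by case: (u == v).
Qed.

Lemma distxx u : dist e u u = 0.
Proof. by apply/eqP; rewrite dist0. Qed.

Lemma eqd_pair (f : T -> nat) a b x y :
  a \in [set x; y] -> b \in [set x; y] -> f x = f y -> f a = f b.
Proof. by case/set2P=> ->; case/set2P=> -> . Qed.

Lemma neq_pair (f : T -> nat) a b x y :
  x \in [set a; b] -> y \in [set a; b] -> f x != f y -> f a != f b.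
Proof.
case/set2P=> ->; case/set2P=> -> //; try by rewrite eqxx.
by rewrite eq_sym.
Qed.

Lemma uniq_resP (R : {set T}) r P : reflect (exists x y, [/\ P = [set x; y],
   dist e r x != dist e r y & forall t, t \in R :\ r -> dist e t x = dist e t y])
  (P \in uniq_res e R r).
Proof.
rewrite inE; apply: (iffP existsP) =>
  [[x /existsP [y /and3P [/eqP -> H1 /forallP H2]]]| [x [y [-> H1 H2]]]].
  exists x, y; split => // t Ht; exact/eqP/(implyP (H2 t) Ht).
exists x; apply/existsP; exists y; rewrite eqxx H1 /=.
apply/forallP => t; apply/implyP => Ht; apply/eqP; exact: H2.
Qed.

Lemma pair_unif (R : {set T}) r a b : [set a; b] \in uniq_res e R r ->
  dist e r a != dist e r b /\ forall t, t \in R :\ r -> dist e t a = dist e t b.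
Proof.
case/uniq_resP => x [y [E H1 H2]].
have ha : a \in [set x; y] by rewrite -E set21.
have hb : b \in [set x; y] by rewrite -E set22.
have hx : x \in [set a; b] by rewrite E set21.
have hy : y \in [set a; b] by rewrite E set22.
split; first exact: (neq_pair hx hy H1).
move=> t Ht; exact: (eqd_pair ha hb (H2 t Ht)).
Qed.

Lemma pair_in (R : {set T}) r a b : dist e r a != dist e r b ->
  (forall t, t \in R :\ r -> dist e t a = dist e t b) ->
  [set a; b] \in uniq_res e R r.
Proof. by move=> H1 H2; apply/uniq_resP; exists a, b. Qed.

Lemma colour_col (R : {set T}) r a b : r \in R -> [set a; b] \in colour_edges e R ->
  ([set a; b] \in uniq_res e R r) = (dist e r a != dist e r b).
Proof.
move=> hr /bigcupP [r' hr' hP]; apply/idP/idP => [/pair_unif [] // | hd].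
case: (eqVneq r' r) => [<- //| ne].
have [_ H] := pair_unif hP.
have hrr : r \in R :\ r' by rewrite !inE eq_sym ne hr.
by rewrite (H r hrr) eqxx in hd.
Qed.

Lemma cnt0 (f : T -> nat) s x y :
  count (fun p => f p.1 != f p.2) (zip (x :: s) (rcons s y)) = 0 -> f x = f y.
Proof.
elim: s x => [|z s IH] x /=; first by case: eqP.
by case: eqP => // -> /IH.
Qed.

Lemma cnt1 (f : T -> nat) s x y :
  count (fun p => f p.1 != f p.2) (zip (x :: s) (rcons s y)) = 1 -> f x != f y.
Proof.
elim: s x => [|z s IH] x /=; first by case: eqP.
case: eqP => [-> /IH //| ne [] /cnt0 <-]; exact/eqP.
Qed.

Lemma part2 (R : {set T}) r x y z :
  resolving e R -> r \in R -> x != y -> x != z -> y != z ->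
  [set x; y] \in uniq_res e R r -> [set x; z] \in uniq_res e R r ->
  [set y; z] \in uniq_res e R r.
Proof.
move=> hres hr _ _ yz /pair_unif [_ H1] /pair_unif [_ H2].
have H t : t \in R :\ r -> dist e t y = dist e t z.
  by move=> Ht; rewrite -(H1 t Ht) (H2 t Ht).
apply: pair_in => //.
have [t tR dt] := hres y z yz.
case: (eqVneq t r) => [<- //| ne].
have htr : t \in R :\ r by rewrite !inE ne tR.
by rewrite H ?eqxx in dt.
Qed.

End Helpers.

Theorem lemma10 (T : finType) (e : rel T) :
  simple_graph e -> connected_graph e ->
  (* (i) *)
  (forall (R : {set T}) (s : seq T) (r : T),
     r \in R -> colour_cycle e R s ->
     has (fun P => P \in uniq_res e R r) (cycle_edges s) ->
     2 <= count (fun P => P \in uniq_res e R r) (cycle_edges s)) /\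
  (* (ii) *)
  (forall (R : {set T}) (r x y z : T),
     resolving e R -> r \in R -> x != y -> x != z -> y != z ->
     [set x; y] \in uniq_res e R r -> [set x; z] \in uniq_res e R r ->
     [set y; z] \in uniq_res e R r) /\
  (* (iii) *)
  (forall (b : T) (R : {set T}),
     basis_forced e b -> metric_basis e R -> 2 <= #|uniq_res e R b|) /\
  (* (iv) *)
  (forall (b : T) (R : {set T}),
     basis_forced e b -> metric_basis e R ->
     exists x y : T, [/\ x \notin R, y \notin R & [set x; y] \in uniq_res e R b]).
Proof.
move=> _ _.
have P3 : forall (b : T) (R : {set T}),
     basis_forced e b -> metric_basis e R -> 2 <= #|uniq_res e R b|.
  move=> b R hb [hres hmin].
  have bR : b \in R by apply: hb; split.
  have Hres0 : forall A : {set T}, R :\ b \subset A ->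
     (forall u v, u != v -> [set u; v] \in uniq_res e R b ->
        exists2 t, t \in A & dist e t u != dist e t v) -> resolving e A.
    move=> A sA HA u v uv.
    have [t tR dt] := hres u v uv.
    case: (eqVneq t b) => [tb | tb]; last first.
      by exists t => //; apply: (subsetP sA); rewrite !inE tb tR.
    subst t.
    case: (boolP [exists t, (t \in R :\ b) && (dist e t u != dist e t v)]) =>
      [/existsP [t /andP [ht dt']] | hno].
      by exists t => //; apply: (subsetP sA).
    apply: HA => //; apply: pair_in => // t ht.
    apply/eqP; apply: contraNT hno => hne; by apply/existsP; exists t; rewrite ht hne.
  have Hmb : forall w, resolving e (w |: (R :\ b)) -> w = b.
    move=> w hw.
    have mb : metric_basis e (w |: (R :\ b)).
      split => // S hS; apply: leq_trans (hmin S hS).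
      by rewrite cardsU1 (cardsD1 b R) bR leq_add2r leq_b1.
    have := hb _ mb; rewrite !inE eqxx /=.
    by rewrite orbF => /eqP.
  case: (leqP 2 #|uniq_res e R b|) => // hc0.
  move: hc0; rewrite ltnS leq_eqVlt ltnS leqn0 => /orP [] hc.
    case/cards1P: hc => P hU.
    have : P \in uniq_res e R b by rewrite hU set11.
    case/uniq_resP => x [y [EP dxy _]].
    have xy : x != y by apply: contraNneq dxy => ->.
    have key : forall w w', w != w' -> [set w; w'] = P ->
        resolving e (w |: (R :\ b)).
      move=> w w' ww' Ew.
      apply: Hres0; first exact: subsetUr.
      move=> u v uv huv; exists w; first exact: setU11.
      have : [set u; v] = P by apply/set1P; rewrite -hU.
      move=> Euv.
      apply: (neq_pair (f:=dist e w) (a:=u) (b:=v) (x:=w) (y:=w')).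
      - by rewrite Euv -Ew set21.
      - by rewrite Euv -Ew set22.
      by rewrite distxx eq_sym dist0.
    have hx := Hmb _ (key x y xy (esym EP)).
    have yx : y != x by rewrite eq_sym.
    have hy := Hmb _ (key y x yx (etrans (setUC _ _) (esym EP))).
    by rewrite hx hy eqxx in xy.
  have hU : uniq_res e R b = set0 by apply/eqP; rewrite -cards_eq0.
  have hr : resolving e (R :\ b).
    apply: Hres0 => // u v _; by rewrite hU inE.
  have := hmin _ hr; rewrite (cardsD1 b R) bR.
  by rewrite add1n ltnn.
split.
  move=> R s r hr /and3P [_ hs hall] hhas.
  case: s hs hall hhas => // x s _ hall hhas.
  rewrite /cycle_edges count_map in hhas *.
  rewrite has_map in hhas.
  have E : {in zip (x :: s) (rot 1 (x :: s)), (preim (fun p => [set p.1; p.2])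
           (fun P => P \in uniq_res e R r)) =1 (fun p => dist e r p.1 != dist e r p.2)}.
    move=> p hp /=; apply: colour_col => //.
    by move/allP: hall; apply; apply: map_f.
  rewrite (eq_in_count E); rewrite (eq_in_has E) has_count in hhas.
  rewrite rot1_cons in hhas *.
  move: hhas; case H: count => [|[|n]] //= _.
  by have := cnt1 H; rewrite eqxx.
split; first exact: part2.
split; first exact: P3.
move=> b R hb hmb.
have bR : b \in R by apply: hb.
have [hres _] := hmb.
have /card_gt1P [P1 [P2 [h1 h2 ne]]] := P3 b R hb hmb.
have inRb : forall z w, dist e b z != dist e b w ->
    (forall t, t \in R :\ b -> dist e t z = dist e t w) -> z \in R -> z = b.
  move=> z w dzw Hz zR; case: (eqVneq z b) => // zb; exfalso.
  have zRb : z \in R :\ b by rewrite !inE zb zR.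
  have := Hz z zRb; rewrite distxx => /esym/eqP; rewrite dist0 => /eqP zw.
  by rewrite zw eqxx in dzw.
have side : forall P, P \in uniq_res e R b ->
   (exists x y, [/\ x \notin R, y \notin R & P = [set x; y]]) \/
   exists y, [/\ y \notin R, y != b & P = [set b; y]].
  move=> P hP; have := hP; case/uniq_resP => x [y [EP dxy H]].
  have dyx : dist e b y != dist e b x by rewrite eq_sym.
  have H' : forall t, t \in R :\ b -> dist e t y = dist e t x.
    by move=> t ht; rewrite H.
  case: (boolP (x \in R)) => xR.
    have xb := inRb _ _ dxy H xR; subst x.
    right; exists y; split => //.
      by apply/negP => /(inRb _ _ dyx H') yb; rewrite yb eqxx in dxy.
    by apply: contraNneq dxy => ->.
  case: (boolP (y \in R)) => yR.
    have yb := inRb _ _ dyx H' yR; subst y.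
    right; exists x; split => //; last by rewrite EP setUC.
    by apply: contraNneq dxy => ->.
  by left; exists x, y.
have fin : forall P, P \in uniq_res e R b ->
    (exists x y, [/\ x \notin R, y \notin R & P = [set x; y]]) ->
    exists x y, [/\ x \notin R, y \notin R & [set x; y] \in uniq_res e R b].
  move=> P hP [x [y [xR yR EP]]]; exists x, y; split => //; by rewrite -EP.
case: (side P1 h1) => [|[y1 [y1R y1b E1]]]; first exact: fin h1.
case: (side P2 h2) => [|[y2 [y2R y2b E2]]]; first exact: fin h2.
exists y1, y2; split => //.
have y12 : y1 != y2 by apply: contraNneq ne => y12; rewrite E1 E2 y12.
apply: (part2 (x:=b) hres bR) => //; try by rewrite eq_sym.
- by rewrite -E1.
- by rewrite -E2.
Qed.
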